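(* There is a constant $C$ depending only on $n$ such that: if $A\in gl(n,\mathbb{C})$ is a nonzero block diagonal nilpotent matrix each of whose diagonal blocks is in reduced column echelon form, then there exists $S\in Gl(n,\mathbb{C})$ with $\|S^{\pm1}\|\le C(1+\|A\|)^{n!}$ such that $S^{-1}AS$ is in Jordan normal form; moreover $S$ is block diagonal with the same block decomposition as $A$.
   Context: $\|\cdot\|$ is the operator norm. The length of a nonzero column is the row index of its last nonzero entry. A matrix is in column echelon form if column lengths are strictly increasing except for the first columns which may be zero; its pivots are the last nonzero coefficients of its nonzero columns; reduced column echelon form means column echelon form with all pivots equal to $1$. *)

(* Defs.v *)
From HB Require Import structures.
From mathcomp Require Import all_boot all_order all_algebra.
From mathcomp Require Import complex.
From mathcomp Require Import classical_sets reals.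
Set Implicit Arguments. Unset Strict Implicit. Unset Printing Implicit Defensive.
Import Order.TTheory GRing.Theory Num.Theory.
Local Open Scope ring_scope.

Section Defs.
Variable R : realType.
Local Notation C := (complex R).

Definition vnorm (m : nat) (x : 'cV[C]_m) : R :=
  Num.sqrt (\sum_(i < m) (Normc.normc (x i 0)) ^+ 2).

Definition opnorm (m : nat) (M : 'M[C]_m) : R :=
  sup [set vnorm (M *m x) | x in [set x : 'cV[C]_m | vnorm x <= 1]]%classic.

Definition is_nilpotent (m : nat) (M : 'M[C]_m) : Prop :=
  exists k : nat, M ^+ k = 0.

(* Row i is the length of column j (i.e. the row index of its last nonzero
   entry); M i j is then the pivot of column j. *)
Definition is_last_nonzero (m : nat) (M : 'M[C]_m) (i j : 'I_m) : Prop :=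
  M i j != 0 /\ forall i' : 'I_m, (i < i')%N -> M i' j = 0.

Definition col_echelon (m : nat) (M : 'M[C]_m) : Prop :=
  exists p : nat,
    (forall j : 'I_m, (j < p)%N -> col j M = 0) /\
    (forall j : 'I_m, (p <= j)%N -> col j M != 0) /\
    (forall (j j' i i' : 'I_m), (j < j')%N ->
        is_last_nonzero M i j -> is_last_nonzero M i' j' -> (i < i')%N).

Definition reduced_col_echelon (m : nat) (M : 'M[C]_m) : Prop :=
  col_echelon M /\
  forall i j : 'I_m, is_last_nonzero M i j -> M i j = 1.

Definition jordan_block (lam : C) (m : nat) : 'M[C]_m :=
  \matrix_(i < m, j < m)
     (if i == j then lam else if (j == i.+1 :> nat) then 1 else 0).

Definition jordan_form (m : nat) (M : 'M[C]_m) : Prop :=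
  exists (k : nat) (q : 'I_k -> nat) (lam : 'I_k -> C)
         (E : (\sum_(i < k) q i)%N = m),
    M = castmx (E, E) (@mxdiag _ _ q (fun i => jordan_block (lam i) (q i))).

End Defs.

(* Main.v *)
Require Import Defs.
From HB Require Import structures.
From mathcomp Require Import all_boot all_order all_algebra.
From mathcomp Require Import complex.
From mathcomp Require Import classical_sets reals.
From mathcomp Require Import zify.
From mathcomp Require Import ring lra.
From mathcomp Require Import fingroup perm.
Import Order.TTheory GRing.Theory Num.Theory.
Set Implicit Arguments. Unset Strict Implicit. Unset Printing Implicit Defensive.

Lemma chain_seq (F : nat -> option nat) m :
  (forall j x, j < m -> F j = Some x -> x < j) ->
  (forall j j' x, j < m -> j' < m -> F j = Some x -> F j' = Some x -> j = j') ->
  exists s : seq nat, perm_eq s (iota 0 m) /\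
    forall c x, c < m -> F (nth 0 s c) = Some x -> 0 < c /\ x = nth 0 s c.-1.
Proof.
elim: m => [|m IH] Hlt Hinj; first by exists [::]; split.
have [s' [Hs' Hp]] : exists s : seq nat, perm_eq s (iota 0 m) /\
    forall c x, c < m -> F (nth 0 s c) = Some x -> 0 < c /\ x = nth 0 s c.-1.
  apply: IH => [j x hj|j j' x hj hj']; first exact: Hlt (ltnW _).
  by apply: Hinj; apply: ltnW.
have sz : size s' = m by rewrite (perm_size Hs') size_iota.
have inS z : z \in s' -> z < m by rewrite (perm_mem Hs') mem_iota.
have perm1 : perm_eq (rcons s' m) (iota 0 m.+1).
  by rewrite -addn1 iotaD -cats1 perm_cat2r.
case Fm: (F m) => [x|]; last first.
  exists (rcons s' m); split => // c y hc.
  rewrite nth_rcons sz; case: (ltnP c m) => h1.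
    move=> hF; have [h3 h4] := Hp _ _ h1 hF; split => //.
    by rewrite nth_rcons sz (leq_ltn_trans (leq_pred c) h1).
  have -> : c = m by lia.
  by rewrite eqxx Fm.
have xm : x < m by apply: Hlt Fm.
have xs : x \in s' by rewrite (perm_mem Hs') mem_iota.
set pos := index x s'.
have posm : pos < m by rewrite -sz index_mem.
pose s := take pos.+1 s' ++ m :: drop pos.+1 s'.
have nthE c : nth 0 s c =
    if c <= pos then nth 0 s' c else if c == pos.+1 then m else nth 0 s' c.-1.
  rewrite /s nth_cat size_take sz.
  have -> : (if pos.+1 < m then pos.+1 else m) = pos.+1 by case: ltnP => //; lia.
  rewrite ltnS.
  case: (leqP c pos) => h1; first by rewrite nth_take.
  case: eqP => [->|h2]; first by rewrite subnn.
  have -> : c - pos.+1 = (c - pos.+2).+1 by lia.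
  by rewrite /= nth_drop; congr nth; lia.
exists s; split.
  apply: perm_trans perm1; rewrite /s -cat1s perm_catCA /= -cats1.
  by rewrite perm_sym -cat1s perm_catC /= cat_take_drop.
move=> c y hc; rewrite nthE.
case: (leqP c pos) => h1.
  move=> hF; have [h3 h4] := Hp _ _ (leq_ltn_trans h1 posm) hF; split => //.
  by rewrite nthE (leq_trans (leq_pred c) h1).
case: eqP => [hc1|hc1].
  rewrite Fm => -[<-]; split; first by rewrite hc1.
  by rewrite nthE hc1 /= leqnn nth_index.
move=> hF.
have cm : c.-1 < m by lia.
have [h3 h4] := Hp _ _ cm hF.
case: (eqVneq c.-1 pos.+1) => hc2.
  exfalso.
  have zin : nth 0 s' c.-1 \in s' by rewrite mem_nth // sz.
  have zm := inS _ zin.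
  have e : nth 0 s' c.-1 = m.
    apply: (Hinj _ _ x (ltnW zm) (ltnSn m) _ Fm).
    by rewrite hF h4 hc2 /= nth_index.
  by rewrite e ltnn in zm.
split; first by lia.
rewrite nthE; have -> : (c.-1 <= pos) = false by lia.
by rewrite (negbTE hc2).
Qed.

Lemma chain_perm m (f : 'I_m -> option 'I_m) :
  (forall j x, f j = Some x -> x < j) ->
  (forall j j' x, f j = Some x -> f j' = Some x -> j = j') ->
  exists s : {perm 'I_m}, forall c x, f (s c) = Some x ->
    exists c' : 'I_m, c'.+1 = c :> nat /\ s c' = x.
Proof.
move=> Hlt Hinj.
pose F j := if @insub _ (fun j => j < m) 'I_m j is Some jo then omap val (f jo) else None.
have FE (j : 'I_m) : F j = omap val (f j) by rewrite /F valK.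
have [s [Hs Hp]] : exists s : seq nat, perm_eq s (iota 0 m) /\
    forall c x, c < m -> F (nth 0 s c) = Some x -> 0 < c /\ x = nth 0 s c.-1.
  apply: chain_seq => [j x hj|j j' x hj hj'].
    have -> : j = Ordinal hj by [].
    rewrite FE; case E: (f _) => [y|] //= [<-]; exact: Hlt E.
  have -> : j = Ordinal hj by [].
  have -> : j' = Ordinal hj' by [].
  rewrite !FE; case E: (f _) => [y|] //=; case E': (f _) => [y'|] //= [e] [e'].
  have : y = y' by apply: val_inj; rewrite /= e e'.
  move=> eyy; subst y'; have := Hinj _ _ _ E E'; by move=> [].
have sz : size s = m by rewrite (perm_size Hs) size_iota.
have inS c : c < m -> nth 0 s c < m.
  move=> hc; have : nth 0 s c \in iota 0 m by rewrite -(perm_mem Hs) mem_nth // sz.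
  by rewrite mem_iota.
pose g (c : 'I_m) : 'I_m := Ordinal (inS _ (ltn_ord c)).
have ginj : injective g.
  move=> c c' /(congr1 val) /= e; apply: val_inj => /=.
  have us : uniq s by rewrite (perm_uniq Hs) iota_uniq.
  by apply/eqP; rewrite -(nth_uniq 0 _ _ us) ?sz // e.
exists (perm ginj) => c x; rewrite permE => hf.
have := Hp c (val x) (ltn_ord c).
have -> : nth 0 s c = g c by [].
rewrite FE hf => /(_ erefl) [h1 h2].
have hc' : c.-1 < m by apply: leq_ltn_trans (leq_pred _) (ltn_ord c).
exists (Ordinal hc'); split; first by rewrite /= prednK.
by apply: val_inj; rewrite permE /= h2.
Qed.

Local Open Scope ring_scope.

Section Norms.
Variable R : realType.
Local Notation C := (complex R).
Local Notation nc := (@Normc.normc R).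

Lemma nc_ge0 (x : C) : 0 <= nc x.
Proof. by case: x => a b; apply: sqrtr_ge0. Qed.

Lemma ncD (x y : C) : nc (x + y) <= nc x + nc y.
Proof. exact: (@le_normcD R x y). Qed.

Lemma ncM (x y : C) : nc (x * y) = nc x * nc y.
Proof. exact: Normc.normcM. Qed.

Lemma nc0 : nc 0 = 0. Proof. exact: Normc.normc0. Qed.
Lemma nc1 : nc 1 = 1. Proof. exact: Normc.normc1. Qed.

Lemma nc_sum (I : finType) (F : I -> C) : nc (\sum_i F i) <= \sum_i nc (F i).
Proof.
apply: (big_ind2 (fun x y => nc x <= y)); first by rewrite nc0.
  by move=> x1 y1 x2 y2 h1 h2; apply: le_trans (ncD _ _) _; apply: lerD.
by [].
Qed.

Lemma sum_ge_term (I : finType) (F : I -> R) (i : I) :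
  (forall j, 0 <= F j) -> F i <= \sum_j F j.
Proof.
move=> h; rewrite (bigD1 i) //= lerDl; apply: sumr_ge0 => j _; exact: h.
Qed.

Lemma sqrt_sum_le (m : nat) (a : 'I_m -> R) : (forall i, 0 <= a i) ->
  Num.sqrt (\sum_i a i ^+ 2) <= \sum_i a i.
Proof.
move=> h; have s0 : 0 <= \sum_i a i by apply: sumr_ge0.
rewrite -(@ger0_norm _ (\sum_i a i)) // -sqrtr_sqr ler_wsqrtr //.
rewrite expr2 big_distrl /=; apply: ler_sum => i _.
rewrite expr2; apply: ler_wpM2l => //; exact: sum_ge_term.
Qed.

Lemma term_le_sqrt (m : nat) (a : 'I_m -> R) (i : 'I_m) : (forall i, 0 <= a i) ->
  a i <= Num.sqrt (\sum_i a i ^+ 2).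
Proof.
move=> h; rewrite -(@ger0_norm _ (a i)) // -sqrtr_sqr ler_wsqrtr //.
apply: (@sum_ge_term _ (fun j => a j ^+ 2) i) => j; exact: sqr_ge0.
Qed.

Definition mxsum (m : nat) (X : 'M[C]_m) : R := \sum_i \sum_j nc (X i j).

Lemma vnorm_ge_entry m (x : 'cV[C]_m) i : nc (x i 0) <= vnorm x.
Proof. by rewrite /vnorm; apply: (@term_le_sqrt m (fun i => nc (x i 0))) => j; exact: nc_ge0. Qed.

Lemma opnorm_set_ub m (X : 'M[C]_m) :
  ubound [set vnorm (X *m x) | x in [set x : 'cV[C]_m | vnorm x <= 1]]%classic
    (mxsum X).
Proof.
move=> _ [x /= hx <-].
rewrite /vnorm. have := @sqrt_sum_le m (fun i => nc ((X *m x) i 0)). move=> /(_ (fun i => nc_ge0 _)) h; apply: le_trans h _.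
apply: ler_sum => i _; rewrite mxE; apply: le_trans (nc_sum _) _.
apply: ler_sum => j _; rewrite ncM -[Z in _ <= Z]mulr1.
apply: ler_wpM2l; first exact: nc_ge0.
exact: le_trans (vnorm_ge_entry _ _) hx.
Qed.

Lemma opnorm_set_n0 m (X : 'M[C]_m) :
  ([set vnorm (X *m x) | x in [set x : 'cV[C]_m | vnorm x <= 1]]%classic !=set0)%classic.
Proof.
exists (vnorm (X *m 0)), 0 => //=.
rewrite /vnorm big1 ?sqrtr0 // => i _; rewrite mxE nc0 expr0n //.
Qed.

Lemma opnorm_le_mxsum m (X : 'M[C]_m) : opnorm X <= mxsum X.
Proof. apply: ge_sup; [exact: opnorm_set_n0 | exact: opnorm_set_ub]. Qed.

Lemma entry_le_opnorm m (X : 'M[C]_m) i j : nc (X i j) <= opnorm X.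
Proof.
have hs : has_sup [set vnorm (X *m x) | x in [set x : 'cV[C]_m | vnorm x <= 1]]%classic.
  by split; [exact: opnorm_set_n0 | exists (mxsum X); exact: opnorm_set_ub].
have h2 : vnorm (X *m delta_mx j 0) <= opnorm X.
  apply: (sup_upper_bound hs); exists (delta_mx j 0) => //=.
  rewrite /vnorm (bigD1 j) //= big1 ?addr0.
    by rewrite mxE !eqxx nc1 expr1n sqrtr1.
  by move=> l hl; rewrite mxE (negbTE hl) nc0 expr0n.
apply: le_trans h2; have := vnorm_ge_entry (X *m delta_mx j 0) i.
by rewrite -colE mxE.
Qed.

End Norms.

Section MxDiag.
Variable (K : comPzRingType) (k : nat) (p : 'I_k -> nat).

Lemma mxdiag_mul (X Y : forall i, 'M[K]_(p i)) :
  mxdiag X *m mxdiag Y = mxdiag (fun i => X i *m Y i).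
Proof.
rewrite [mxdiag Y]/mxdiag mul_mxdiag_mxblock /mxdiag; apply: eq_mxblock => i j.
case: eqP => [e|_]; last by rewrite mulmx0.
by subst j; rewrite !conform_mx_id.
Qed.

Lemma mxdiag1 : mxdiag (fun i => (1%:M : 'M[K]_(p i))) = 1%:M.
Proof. exact: mxdiagZ. Qed.

Lemma mxdiag_RankE (X : forall i, 'M[K]_(p i)) i (a b : 'I_(p i)) :
  mxdiag X (tagnat.Rank i a) (tagnat.Rank _ b) = X i a b.
Proof.
have := submxblock_diag X i => /matrixP /(_ a b).
by rewrite /submxblock mxE.
Qed.

Lemma mxdiag_Rank0 (X : forall i, 'M[K]_(p i)) i j (a : 'I_(p i)) (b : 'I_(p j)) :
  i != j -> mxdiag X (tagnat.Rank i a) (tagnat.Rank _ b) = 0.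
Proof.
move=> hij; have := @mxblockK _ _ _ p p (fun i j => if i == j then conform_mx 0 (X i) else 0 : 'M_(p i, p j)) i j.
rewrite (negbTE hij) => /matrixP /(_ a b).
by rewrite /submxblock mxE [RHS]mxE.
Qed.

Lemma mxdiag_entry (X : forall i, 'M[K]_(p i)) (s t : 'I_(\sum_i p i)) :
  mxdiag X s t = 0 \/ exists i (a b : 'I_(p i)),
     s = tagnat.Rank i a /\ t = tagnat.Rank i b /\ mxdiag X s t = X i a b.
Proof.
rewrite -(tagnat.sig2K s) -(tagnat.sig2K t).
case: (eqVneq (tagnat.sig1 s) (tagnat.sig1 t)) => [e|ne]; last first.
  by left; apply: mxdiag_Rank0.
right; move: (tagnat.sig2 s) (tagnat.sig2 t); rewrite -e => a b.
by exists (tagnat.sig1 s), a, b; rewrite mxdiag_RankE.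
Qed.

Lemma mxdiagX (X : forall i, 'M[K]_(p i)) e :
  (mxdiag X) ^+ e = mxdiag (fun i => (X i) ^+ e) :> 'M_(\sum_i p i).
Proof.
elim: e => [|e IH]. by rewrite expr0; under eq_mxdiag do rewrite expr0; rewrite mxdiag1.
by rewrite exprS IH -mulmxE mxdiag_mul; apply: eq_mxdiag => i; rewrite exprS -mulmxE.
Qed.

End MxDiag.

Section SD.
Variable R : realType.
Local Notation C := (complex R).

Definition superdiag01 m (M : 'M[C]_m) :=
  forall i j : 'I_m, M i j != 0 -> (j = i.+1 :> nat) /\ M i j = 1.

Definition jf2 m (M : 'M[C]_m) := exists k (q : nat -> nat) (E : (\sum_(i < k) q i)%N = m),
  M = castmx (E, E) (mxdiag (fun i : 'I_k => jordan_block (0 : C) (q i))).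

Lemma sd_jf2 N m (M : 'M[C]_m) : (m <= N)%N -> superdiag01 M -> jf2 M.
Proof.
elim: N m M => [|N IH] m M hmN hM.
  move: M hM; have -> : m = 0%N by lia.
  move=> M _; exists 0%N, (fun _ => 0%N), (big_ord0 _ _ _ _).
  by apply/matrixP => -[].
case: m M hmN hM => [|m'] M hmN hM.
  exists 0%N, (fun _ => 0%N), (big_ord0 _ _ _ _).
  by apply/matrixP => -[].
pose P d := (d.+1 == m'.+1) || (M (inord d) (inord d.+1) == 0).
have exP : exists d, P d by exists m'; rewrite /P eqxx.
have [d Pd dmin] := ex_minnP exP.
have dm : (d <= m')%N by apply: dmin; rewrite /P eqxx.
have notP i : (i < d)%N -> M (inord i) (inord i.+1) = 1.
  move=> hi; have : ~~ P i by apply/negP => /dmin; lia.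
  rewrite negb_or => /andP [_ hne].
  by have [] := hM _ _ hne.
pose m'' := (m' - d)%N.
have hidx (a : 'I_m'') : (d.+1 + a < m'.+1)%N by have := ltn_ord a; lia.
pose M'' : 'M[C]_m'' := \matrix_(a, b) M (Ordinal (hidx a)) (Ordinal (hidx b)).
have hM'' : superdiag01 M''.
  move=> a b; rewrite mxE => /hM [h1 h2]; split; first by move: h1 => /=; lia.
  by [].  
have [k' [q' [E' eq']]] := IH m'' M'' ltac:(lia) hM''.
pose q2 j := if j is j'.+1 then q' j' else d.+1.
have E : (\sum_(i < k'.+1) q2 i)%N = m'.+1.
  rewrite big_ord_recl /=.
  have -> : (\sum_(i < k') q2 (lift ord0 i) = \sum_(i < k') q' i)%N.
    by apply: eq_bigr => i _; rewrite lift0.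
  by rewrite E'; lia.
exists k'.+1, q2, E.
apply/matrixP => i j; rewrite castmxE mxdiag_recl castmxE /=.
set D := mxdiag _.
rewrite /block_mx !mxE.
set ii := cast_ord _ (cast_ord _ i).
set jj := cast_ord _ (cast_ord _ j).
have iiE : ii = i :> nat by [].
have jjE : jj = j :> nat by [].
have inv (x : 'I_m'.+1) : inord x = x by rewrite inord_val.
case: splitP => a Ha; rewrite mxE; case: splitP => b Hb.
- rewrite !mxE.
  case: (eqVneq (M i j) 0) => hz.
    rewrite hz; case: eqP => // _; case: eqP => // hab.
    have hid : (i < d)%N by have := ltn_ord b; lia.
    have := notP _ hid; rewrite inv.
    have -> : inord i.+1 = j by apply: val_inj; rewrite /= inordK; lia.
    by rewrite hz => /eqP; rewrite eq_sym oner_eq0.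
  have [h1 h2] := hM _ _ hz; rewrite h2.
  have -> : (a == b) = false by apply/eqP => /(congr1 val) /=; lia.
  by have -> : (b == a.+1 :> nat) by apply/eqP; lia.
- rewrite !mxE; apply/eqP; apply: contraT => hz.
  have [h1 h2] := hM _ _ hz.
  have hid : i = d :> nat by have := ltn_ord a; lia.
  move: Pd; rewrite /P.
  have -> : (d.+1 == m'.+1) = false by apply/negbTE; have := ltn_ord j; lia.
  have -> : inord d = i by apply: val_inj; rewrite /= inordK; lia.
  have hj := ltn_ord j.
  have -> : inord d.+1 = j by apply: val_inj; rewrite /= inordK; lia.
  by rewrite /= (negbTE hz).
- rewrite !mxE; apply/eqP; apply: contraT => hz.
  have [h1 h2] := hM _ _ hz.
  have := ltn_ord b; lia.
- have := congr1 (fun X : 'M[C]_m'' => X (cast_ord E' a) (cast_ord E' b)) eq'.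
  rewrite castmxE !cast_ordK mxE => <-.
  by congr (M _ _); apply: val_inj => /=; rewrite -?iiE -?jjE ?Ha ?Hb.
Qed.

Lemma sd_jordan m (M : 'M[C]_m) : superdiag01 M -> jordan_form M.
Proof.
move=> /(@sd_jf2 m m M (leqnn m)) [k [q [E eq]]].
by exists k, (fun i => q i), (fun _ => 0), E.
Qed.

End SD.

Section BndGen.
Variable R : realType.
Local Notation C := (complex R).
Local Notation nc := (@Normc.normc R).

Definition mxbnd m (X : 'M[C]_m) (b : R) := forall i j, nc (X i j) <= b.

Lemma mxbnd_le m (X : 'M[C]_m) b b' : mxbnd X b -> b <= b' -> mxbnd X b'.
Proof. by move=> h hb i j; apply: le_trans (h i j) hb. Qed.

Lemma mxbnd_mul m (X Y : 'M[C]_m) b c :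
  mxbnd X b -> mxbnd Y c -> mxbnd (X *m Y) (m%:R * b * c).
Proof.
move=> hX hY i j; rewrite mxE; apply: le_trans (nc_sum _) _.
have -> : m%:R * b * c = \sum_(l < m) (b * c).
  by rewrite sumr_const card_ord -mulr_natl; ring.
apply: ler_sum => l _; rewrite ncM.
by apply: ler_pM; rewrite ?nc_ge0.
Qed.

Lemma mxbnd_one m : mxbnd (1%:M : 'M[C]_m) 1.
Proof. by move=> i j; rewrite mxE; case: eqP => _; rewrite ?nc1 ?nc0. Qed.

Lemma mxbnd_pow m (X : 'M[C]_m) b e : mxbnd X b -> mxbnd (X ^+ e) ((m%:R * b) ^+ e).
Proof.
move=> hX; elim: e => [|e IH]; first by rewrite !expr0; exact: mxbnd_one.
rewrite exprSr -mulmxE; apply: mxbnd_le (mxbnd_mul IH hX) _.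
by rewrite exprSr (_ : m%:R * (m%:R * b) ^+ e * b = (m%:R * b) ^+ e * (m%:R * b)) //; ring.
Qed.

Lemma mxbnd_sum m (I : finType) (F : I -> 'M[C]_m) (b : I -> R) :
  (forall e, mxbnd (F e) (b e)) -> mxbnd (\sum_e F e) (\sum_e b e).
Proof.
move=> h i j; rewrite summxE; apply: le_trans (nc_sum _) _.
by apply: ler_sum => e _; apply: h.
Qed.

End BndGen.

Section Block.
Variable R : realType.
Local Notation C := (complex R).
Local Notation nc := (@Normc.normc R).
Variables (m : nat) (M : 'M[C]_m).
Hypothesis hred : reduced_col_echelon M.
Hypothesis hnil : is_nilpotent M.

Definition lastb i j := (M i j != 0) && [forall i' : 'I_m, (i < i')%N ==> (M i' j == 0)].
Definition fpiv j := [pick i | lastb i j].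

Lemma lastbP i j : lastb i j -> is_last_nonzero M i j.
Proof.
move=> /andP [h1 /forallP h2]; split => // i' hi.
exact/eqP/(implyP (h2 i') hi).
Qed.

Lemma fSb j i : fpiv j = Some i -> lastb i j.
Proof. by rewrite /fpiv; case: pickP => // x hx [<-]. Qed.

Lemma fS j i : fpiv j = Some i -> M i j = 1 /\ forall i' : 'I_m, (i < i')%N -> M i' j = 0.
Proof.
move=> /fSb /lastbP hl; split; [exact: hred.2 _ _ hl | exact: hl.2].
Qed.

Lemma fN j : fpiv j = None -> forall i, M i j = 0.
Proof.
rewrite /fpiv; case: pickP => // hn _ i; apply/eqP; apply: contraT => hi.
case: (@arg_maxnP _ i (fun i' => M i' j != 0) (fun i : 'I_m => val i) hi) => i0 hi0 hmax.
move: (hn i0); rewrite /lastb hi0 /= => /negbT /negP h; exfalso; apply: h.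
apply/forallP => i'; apply/implyP => hlt; apply: contraT => hz.
have := hmax _ hz; rewrite /geq /=; lia.
Qed.

Lemma fN_le (j j' : 'I_m) : fpiv j = None -> (j' <= j)%N -> forall i, M i j' = 0.
Proof.
move=> /fN hj hle i.
have [p [hz [hnz _]]] := hred.1.
have hjp : (j < p)%N.
  rewrite ltnNge; apply/negP => /hnz; apply/negP; rewrite negbK.
  by apply/eqP/matrixP => a b; rewrite !mxE hj.
have := hz j' (leq_ltn_trans hle hjp) => /matrixP /(_ i 0).
by rewrite !mxE.
Qed.

Lemma f_mono (j j' i i' : 'I_m) : (j < j')%N -> fpiv j = Some i -> fpiv j' = Some i' -> (i < i')%N.
Proof.
move=> hlt /fSb /lastbP h1 /fSb /lastbP h2.
have [p [_ [_ hinc]]] := hred.1.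
exact: hinc hlt h1 h2.
Qed.

Lemma f_inj j j' x : fpiv j = Some x -> fpiv j' = Some x -> j = j'.
Proof.
move=> h1 h2; apply: val_inj; case: (ltngtP j j') => // hlt.
  by have := f_mono hlt h1 h2; rewrite ltnn.
by have := f_mono hlt h2 h1; rewrite ltnn.
Qed.

Lemma f_le j i : fpiv j = Some i -> (i <= j)%N.
Proof.
move=> hf.
have step : forall t (ht : (j + t < m)%N), exists x, fpiv (Ordinal ht) = Some x /\ (i + t <= x)%N.
  elim=> [|t IH] ht.
    exists i; split; last by rewrite addn0.
    by rewrite -hf; congr fpiv; apply: val_inj => /=; rewrite addn0.
  have ht' : (j + t < m)%N by lia.
  have [x [hx hix]] := IH ht'.
  case E: (fpiv (Ordinal ht)) => [y|].
    exists y; split => //.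
    have hxy := f_mono (_ : (Ordinal ht' < Ordinal ht)%N) hx E.
    by move: hxy => /(_ ltac:(rewrite /=; lia)); lia.
  have := fN_le E (_ : (Ordinal ht' <= Ordinal ht)%N) x.
  have := (fS hx).1.
  by move=> -> /(_ ltac:(rewrite /=; lia)) /eqP; rewrite oner_eq0.
have hj := ltn_ord j.
have ht : (j + (m.-1 - j) < m)%N by lia.
have [x [_ hx]] := step (m.-1 - j)%N ht.
have := ltn_ord x; lia.
Qed.

Lemma upper (i j : 'I_m) : (j < i)%N -> M i j = 0.
Proof.
move=> h; case E: (fpiv j) => [x|]; last exact: fN E i.
by apply: (fS E).2; apply: leq_ltn_trans (f_le E) h.
Qed.

Lemma pow_low e (i j : 'I_m) : (j < i)%N -> (M ^+ e) i j = 0.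
Proof.
elim: e i j => [|e IH] i j h.
  by rewrite expr0 mxE; case: eqP => // e; subst; rewrite ltnn in h.
rewrite exprSr -mulmxE mxE big1 // => l _.
case: (ltnP l i) => hl; first by rewrite IH // mul0r.
by rewrite upper ?mulr0 //; apply: leq_trans h hl.
Qed.

Lemma pow_diag e (j : 'I_m) : (M ^+ e) j j = M j j ^+ e.
Proof.
elim: e => [|e IH]; first by rewrite expr0 mxE eqxx.
rewrite exprSr -mulmxE mxE (bigD1 j) //= IH big1 ?addr0; first by rewrite exprSr.
move=> l hl; case: (ltngtP l j) => h.
- by rewrite pow_low // mul0r.
- by rewrite upper // mulr0.
- by move: hl; rewrite (val_inj h) eqxx.
Qed.

Lemma f_lt j i : fpiv j = Some i -> (i < j)%N.
Proof.
move=> hf; rewrite ltn_neqAle f_le // andbT; apply/eqP => e.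
have ij : i = j by apply: val_inj.
subst i; have [k hk] := hnil.
have := pow_diag k j; rewrite hk mxE (fS hf).1 expr1n => /eqP.
by rewrite eq_sym oner_eq0.
Qed.

Definition gup (y : 'I_m) := [pick x | fpiv x == Some y].

Lemma gupS y x : fpiv x = Some y -> gup y = Some x.
Proof.
rewrite /gup; case: pickP => [x' /eqP hx'|hn] h.
  by congr Some; exact: f_inj hx' h.
by have := hn x; rewrite h eqxx.
Qed.

Lemma gupE y x : gup y = Some x -> fpiv x = Some y.
Proof. by rewrite /gup; case: pickP => // x' /eqP h [<-]. Qed.

Fixpoint wv (e : nat) (j : 'I_m) : 'cV[C]_m :=
  if e is e'.+1 then (if gup j is Some x then M *m wv e' x else delta_mx j 0)
  else delta_mx j 0.

Lemma wv_stable e (j : 'I_m) : (m - j <= e)%N -> wv e.+1 j = wv e j.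
Proof.
elim: e j => [|e IH] j h; first by have := ltn_ord j; lia.
have -> : wv e.+2 j = (if gup j is Some x then M *m wv e.+1 x else delta_mx j 0) by [].
have -> : wv e.+1 j = (if gup j is Some x then M *m wv e x else delta_mx j 0) by [].
case E: (gup j) => [x|] //.
rewrite IH //; have := f_lt (gupE E); lia.
Qed.

Lemma wv_eq e (j : 'I_m) : (m - j <= e)%N -> wv e j = wv (m - j) j.
Proof.
move=> h; rewrite -(subnKC h); elim: (e - (m - j))%N => [|d IH].
  by rewrite addn0.
by rewrite addnS wv_stable // leq_addr.
Qed.

Definition wc (j : 'I_m) := wv m j.

Lemma wv_wc e (j : 'I_m) : (m - j <= e)%N -> wv e j = wc j.
Proof. by move=> h; rewrite /wc (wv_eq h) (wv_eq (leq_subr _ _)). Qed.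

Lemma wc_up x y : fpiv x = Some y -> wc y = M *m wc x.
Proof.
move=> hf; have hyx := f_lt hf.
have hm : (0 < m)%N by have := ltn_ord x; lia.
rewrite -(@wv_wc m.-1.+1 y); last by lia.
by rewrite /= (gupS hf) wv_wc //; lia.
Qed.

Lemma delta_tri (j : 'I_m) : (forall i : 'I_m, (j < i)%N -> (delta_mx j 0 : 'cV[C]_m) i 0 = 0) /\
            (delta_mx j 0 : 'cV[C]_m) j 0 = 1.
Proof.
split; last by rewrite mxE !eqxx.
by move=> i h; rewrite mxE; case: eqP => // e0; subst; rewrite ltnn in h.
Qed.

Lemma wv_tri e (j : 'I_m) : (forall i : 'I_m, (j < i)%N -> wv e j i 0 = 0) /\ wv e j j 0 = 1.
Proof.
elim: e j => [|e IH] j; first exact: delta_tri.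
rewrite /=; case E: (gup j) => [x|]; last exact: delta_tri.
have hf := gupE E; have hjx := f_lt hf.
have [hx1 hx2] := IH x.
have key : forall i : 'I_m, (j <= i)%N -> (M *m wv e x) i 0 = M i x.
  move=> i hi; rewrite mxE (bigD1 x) //= hx2 mulr1 big1 ?addr0 // => l hl.
  case: (ltngtP l x) => h.
  - case El: (fpiv l) => [y|]; last by rewrite fN // mul0r.
    have := f_mono h El hf => hy.
    by rewrite (fS El).2 ?mul0r //; apply: leq_trans hy hi.
  - by rewrite hx1 // mulr0.
  - by move: hl; rewrite (val_inj h) eqxx.
split; first by move=> i hi; rewrite key ?(ltnW hi) // (fS hf).2.
by rewrite key // (fS hf).1.
Qed.

Lemma wc_none x : fpiv x = None -> M *m wc x = 0.
Proof.
move=> hf; apply/matrixP => i z; rewrite ord1 mxE [RHS]mxE big1 // => l _.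
case: (leqP l x) => h; first by rewrite (fN_le hf h) mul0r.
by rewrite /wc (wv_tri m x).1 // mulr0.
Qed.

Definition Wm : 'M[C]_m := \matrix_(i, j) wc j i 0.
Definition Nm : 'M[C]_m := 1%:M - Wm.

Lemma Nm_entry (l j : 'I_m) : (j <= l)%N -> Nm l j = 0.
Proof.
move=> h; rewrite !mxE; case: (ltngtP j l) h => // h _.
  have -> : (l == j) = false by apply/negbTE; rewrite neq_ltn h orbT.
  by rewrite /wc (wv_tri m j).1 // subr0.
have e : l = j by apply: val_inj.
by rewrite e eqxx /wc (wv_tri m j).2 subrr.
Qed.

Lemma Nm_low e (i j : 'I_m) : (j < i + e)%N -> (Nm ^+ e) i j = 0.
Proof.
elim: e i j => [|e IH] i j h.
  by rewrite expr0 mxE; case: eqP => // e0; subst; rewrite addn0 ltnn in h.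
rewrite exprSr -mulmxE mxE big1 // => l _.
case: (ltnP l (i + e)) => hl; first by rewrite IH // mul0r.
by rewrite Nm_entry ?mulr0 //; lia.
Qed.

Lemma Nm_nil : Nm ^+ m = 0.
Proof. by apply/matrixP => i j; rewrite [RHS]mxE Nm_low //; have := ltn_ord j; lia. Qed.

Definition Vm : 'M[C]_m := \sum_(e < m) Nm ^+ e.

Lemma WV : Wm *m Vm = 1%:M.
Proof.
have h := subrX1 Nm m; rewrite Nm_nil sub0r in h.
have hW : Wm = - (Nm - 1) by rewrite /Nm opprB subKr.
by rewrite mulmxE hW mulNr -h opprK.
Qed.

Lemma VW : Vm *m Wm = 1%:M.
Proof. exact: mulmx1C WV. Qed.

Lemma MW_col (i x : 'I_m) : (M *m Wm) i x = if fpiv x is Some y then Wm i y else 0.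
Proof.
have -> : (M *m Wm) i x = (M *m wc x) i 0.
  by rewrite !mxE; apply: eq_bigr => l _; rewrite !mxE.
case E: (fpiv x) => [y|]; first by rewrite [Wm i y]mxE (wc_up E).
by rewrite wc_none // mxE.
Qed.

Section WithPerm.
Variable s : {perm 'I_m}.
Hypothesis hs : forall c x, fpiv (s c) = Some x ->
    exists c' : 'I_m, c'.+1 = c :> nat /\ s c' = x.

Definition Sm : 'M[C]_m := \matrix_(i, c) Wm i (s c).
Definition Sinv : 'M[C]_m := \matrix_(c, j) Vm (s c) j.
Definition Jm : 'M[C]_m :=
  \matrix_(a, c) (if (c == a.+1 :> nat) && (fpiv (s c) != None) then 1 else 0).

Lemma SinvS : Sinv *m Sm = 1%:M.
Proof.
apply/matrixP => c d; rewrite [LHS]mxE.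
have -> : \sum_l Sinv c l * Sm l d = (Vm *m Wm) (s c) (s d).
  by rewrite [RHS]mxE; apply: eq_bigr => l _; rewrite !mxE.
by rewrite VW !mxE (inj_eq perm_inj).
Qed.

Lemma MS : M *m Sm = Sm *m Jm.
Proof.
apply/matrixP => i c.
have -> : (M *m Sm) i c = (M *m Wm) i (s c).
  by rewrite !mxE; apply: eq_bigr => l _; rewrite !mxE.
rewrite MW_col [RHS]mxE.
case E: (fpiv (s c)) => [y|].
  have [c' [hc' hsc']] := hs E.
  rewrite (bigD1 c') //= big1.
    by rewrite !mxE -hc' eqxx E /= mulr1 addr0 hsc'.
  move=> a ha; rewrite [Jm a c]mxE.
  have -> : (c == a.+1 :> nat) = false.
    apply/negbTE; apply: contra ha => /eqP h; apply/eqP; apply: val_inj.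
    by move: h; rewrite -hc'; case.
  by rewrite /= mulr0.
rewrite big1 // => a _; rewrite [Jm a c]mxE E /= andbF mulr0 //.
Qed.

Lemma conj_J : Sinv *m M *m Sm = Jm.
Proof. by rewrite -mulmxA MS mulmxA SinvS mul1mx. Qed.

Lemma J_sd : superdiag01 Jm.
Proof.
move=> i j; rewrite mxE; case: ifP => [/andP [/eqP h _] _ | _]; first by [].
by rewrite eqxx.
Qed.

End WithPerm.

Section BlockBnd.
Variables (n : nat) (X0 : R).
Hypotheses (hn : (0 < n)%N) (hmn : (m <= n)%N) (hX0 : 1 <= X0)
  (hMb : forall i j, nc (M i j) <= X0).
Local Notation K := (n%:R * X0).

Lemma K_ge1 : 1 <= K.
Proof.
have h : 1 <= n%:R :> R by rewrite ler1n.
by have := @ler_pM R 1 n%:R 1 X0 ler01 ler01 h hX0; rewrite mulr1.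
Qed.

Lemma delta_bnd (j i : 'I_m) e : nc ((delta_mx j 0 : 'cV[C]_m) i 0) <= K ^+ e.
Proof.
apply: le_trans (exprn_ege1 e K_ge1).
by rewrite mxE; case: (_ && _); rewrite ?nc1 ?nc0.
Qed.

Lemma wv_bnd e j i : nc (wv e j i 0) <= K ^+ (m.-1 - j).
Proof.
elim: e j i => [|e IH] j i /=; first exact: delta_bnd.
case E: (gup j) => [x|]; last exact: delta_bnd.
have hjx := f_lt (gupE E).
rewrite mxE; apply: le_trans (nc_sum _) _.
apply: (@le_trans _ _ (\sum_(l < m) X0 * K ^+ (m.-1 - x))).
  apply: ler_sum => l _; rewrite ncM.
  by apply: ler_pM; rewrite ?nc_ge0 ?hMb ?IH.
rewrite sumr_const card_ord -[_ *+ m]mulr_natl mulrA.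
apply: (@le_trans _ _ (K * K ^+ (m.-1 - x))).
  apply: ler_wpM2r; first by apply: exprn_ge0; apply: le_trans K_ge1.
  by apply: ler_wpM2r; [apply: le_trans hX0|rewrite ler_nat].
rewrite -exprS; apply: ler_weXn2l; first exact: K_ge1.
by have := ltn_ord x; lia.
Qed.

Lemma W_bnd : mxbnd Wm (K ^+ n.-1).
Proof.
move=> i j; rewrite mxE /wc; apply: le_trans (wv_bnd m j i) _.
by apply: ler_weXn2l; [exact: K_ge1 | lia].
Qed.

Lemma N_bnd : mxbnd Nm (2 * K ^+ n.-1).
Proof.
move=> i j.
have -> : Nm i j = (1%:M : 'M[C]_m) i j - Wm i j by rewrite /Nm !mxE.
apply: le_trans (ncD _ _) _.
have h1 : nc (- Wm i j) <= K ^+ n.-1 by rewrite (@normcN R); apply: W_bnd.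
have h2 := @mxbnd_one R m i j.
have h3 := exprn_ege1 n.-1 K_ge1.
lra.
Qed.

Definition Vbound := n%:R * (n%:R * (2 * K ^+ n.-1)) ^+ n.-1.

Lemma V_bnd : mxbnd Vm Vbound.
Proof.
apply: mxbnd_le (mxbnd_sum (fun e : 'I_m => mxbnd_pow e N_bnd)) _.
have hE : 1 <= 2 * K ^+ n.-1.
  by have := exprn_ege1 n.-1 K_ge1; lra.
have hnE : 1 <= n%:R * (2 * K ^+ n.-1).
  have h : 1 <= n%:R :> R by rewrite ler1n.
  by have := @ler_pM R 1 _ 1 _ ler01 ler01 h hE; rewrite mulr1.
apply: (@le_trans _ _ (\sum_(e < m) (n%:R * (2 * K ^+ n.-1)) ^+ n.-1)).
  apply: ler_sum => e _.
  apply: (@le_trans _ _ ((n%:R * (2 * K ^+ n.-1)) ^+ e)).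
    apply: lerXn2r; rewrite ?nnegrE.
    - by apply: mulr_ge0; [exact: ler0n | apply: le_trans hE].
    - by apply: le_trans hnE.
    - by apply: ler_wpM2r; [apply: le_trans hE | rewrite ler_nat].
  by apply: ler_weXn2l => //; have := ltn_ord e; lia.
rewrite sumr_const card_ord -[_ *+ m]mulr_natl /Vbound.
apply: ler_wpM2r; last by rewrite ler_nat.
by apply: exprn_ge0; apply: le_trans hnE.
Qed.

Lemma block_main : exists T Ti : 'M[C]_m,
  [/\ Ti *m T = 1%:M, superdiag01 (Ti *m M *m T), mxbnd T (K ^+ n.-1) & mxbnd Ti Vbound].
Proof.
have [s hs] := @chain_perm m fpiv f_lt f_inj.
exists (Sm s), (Sinv s); split.
- exact: SinvS.
- by rewrite conj_J //; exact: J_sd.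
- by move=> i c; rewrite mxE; apply: W_bnd.
- by move=> c j; rewrite mxE; apply: V_bnd.
Qed.

End BlockBnd.

End Block.

Section Final.
Variable R : realType.
Local Notation C := (complex R).
Local Notation nc := (@Normc.normc R).

Lemma sd_mxdiag k (p : 'I_k -> nat) (X : forall b, 'M[C]_(p b)) :
  (forall b, superdiag01 (X b)) -> superdiag01 (mxdiag X).
Proof.
move=> hX s t hst.
case: (mxdiag_entry X s t) => [h0|[b [a [c [hs [ht he]]]]]].
  by rewrite h0 eqxx in hst.
rewrite he in hst *; have [h1 h2] := hX b a c hst; split => //.
by rewrite hs ht !tagnat.RankEsum h1 addnS.
Qed.

Lemma mxbnd_diag k (p : 'I_k -> nat) (X : forall b, 'M[C]_(p b)) c :
  0 <= c -> (forall b, mxbnd (X b) c) -> mxbnd (mxdiag X) c.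
Proof.
move=> hc hX s t.
case: (mxdiag_entry X s t) => [->|[b [a [d [_ [_ ->]]]]]]; last exact: hX.
by rewrite nc0.
Qed.

Lemma mxsum_bnd m (X : 'M[C]_m) c : mxbnd X c -> mxsum X <= (m * m)%:R * c.
Proof.
move=> h; rewrite /mxsum.
apply: (@le_trans _ _ (\sum_(i < m) \sum_(j < m) c)).
  by apply: ler_sum => i _; apply: ler_sum => j _; apply: h.
by rewrite !sumr_const !card_ord -mulrnA -[c *+ _]mulr_natl.
Qed.

Lemma fact_ge k : (k <= k`!)%N.
Proof. by case: k => [|k] //; rewrite factS leq_pmulr // fact_gt0. Qed.

Lemma fact_ge1 k : (k.-1 <= k`!)%N.
Proof. exact: leq_trans (leq_pred k) (fact_ge k). Qed.

Lemma fact_ge2 k : (k.-1 * k.-1 <= k`!)%N.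
Proof.
case: k => [|k] //=; rewrite factS; apply: leq_mul => //; exact: fact_ge.
Qed.

Definition c1 (n : nat) : R := n%:R ^+ n.-1.
Definition c2 (n : nat) : R := n%:R * (n%:R * (2 * n%:R ^+ n.-1)) ^+ n.-1.

Lemma c1_ge0 n : 0 <= c1 n. Proof. by apply: exprn_ge0; exact: ler0n. Qed.
Lemma c2_ge0 n : 0 <= c2 n.
Proof.
apply: mulr_ge0; first exact: ler0n.
apply: exprn_ge0; apply: mulr_ge0; first exact: ler0n.
by apply: mulr_ge0 => //; apply: exprn_ge0; exact: ler0n.
Qed.

Lemma num1 n (X0 : R) : 1 <= X0 -> (n%:R * X0) ^+ n.-1 <= (c1 n + c2 n) * X0 ^+ n`!.
Proof.
move=> hX; rewrite exprMn.
apply: (@le_trans _ _ (c1 n * X0 ^+ n`!)).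
  apply: ler_wpM2l; first exact: c1_ge0.
  by apply: ler_weXn2l => //; exact: fact_ge1.
apply: ler_wpM2r; first by apply: exprn_ge0; apply: le_trans hX.
by rewrite lerDl c2_ge0.
Qed.

Lemma num2 n (X0 : R) : 1 <= X0 -> Vbound n X0 <= (c1 n + c2 n) * X0 ^+ n`!.
Proof.
move=> hX.
have -> : Vbound n X0 = c2 n * X0 ^+ (n.-1 * n.-1).
  by rewrite /Vbound /c2 !exprMn exprM; ring.
apply: (@le_trans _ _ (c2 n * X0 ^+ n`!)).
  apply: ler_wpM2l; first exact: c2_ge0.
  by apply: ler_weXn2l => //; exact: fact_ge2.
apply: ler_wpM2r; first by apply: exprn_ge0; apply: le_trans hX.
by rewrite lerDr c1_ge0.
Qed.

End Final.

Theorem proposition6 (R : realType) (n : nat) :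
  exists Cn : R,
  forall (k : nat) (p : 'I_k -> nat) (B : forall b : 'I_k, 'M[complex R]_(p b)),
    (\sum_(b < k) p b)%N = n ->
    let A := @mxdiag _ _ p B in
    A != 0 ->
    is_nilpotent A ->
    (forall b : 'I_k, reduced_col_echelon (B b)) ->
    exists T : forall b : 'I_k, 'M[complex R]_(p b),
      let S := @mxdiag _ _ p T in
      [/\ S \in unitmx,
          opnorm S <= Cn * (1 + opnorm A) ^+ n`!,
          opnorm (invmx S) <= Cn * (1 + opnorm A) ^+ n`!
        & jordan_form (invmx S *m A *m S)].
Proof.
exists ((n * n)%:R * (c1 R n + c2 R n)).
move=> k p B hsum A hA0 hnilA hred.
have hn : (0 < n)%N.
  rewrite lt0n; apply: contraNneq hA0 => hn0; apply/eqP/matrixP => i j.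
  by exfalso; have := ltn_ord i; move: (nat_of_ord i); rewrite hsum hn0.
have i0lt : (0 < \sum_(b < k) p b)%N by rewrite hsum.
pose i0 : 'I_(\sum_(b < k) p b) := Ordinal i0lt.
have hopA : 0 <= opnorm A := le_trans (nc_ge0 _) (entry_le_opnorm A i0 i0).
set X0 := 1 + opnorm A.
have hX0 : 1 <= X0 by rewrite /X0; lra.
have [e he] := hnilA.
have hnilB : forall b, B b ^+ e = 0.
  apply/eq_mxdiagP; rewrite -mxdiagX mxdiag0; exact: he.
have hB b : exists TT : 'M[complex R]_(p b) * 'M[complex R]_(p b),
    [/\ TT.2 *m TT.1 = 1%:M, superdiag01 (TT.2 *m B b *m TT.1),
        mxbnd TT.1 ((n%:R * X0) ^+ n.-1) & mxbnd TT.2 (Vbound n X0)].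
  have hpb : (p b <= n)%N by rewrite -hsum (bigD1 b) //= leq_addr.
  have hent : forall i j, Normc.normc (B b i j) <= X0.
    move=> i j; rewrite -(mxdiag_RankE B).
    by apply: le_trans (entry_le_opnorm A _ _) _; rewrite /X0 lerDr.
  have [T [Ti [h1 h2 h3 h4]]] :=
    block_main (hred b) (ex_intro _ e (hnilB b)) hn hpb hX0 hent.
  by exists (T, Ti).
pose TT b := proj1_sig (boolp.cid (hB b)).
have hTT b := proj2_sig (boolp.cid (hB b)).
pose T b := (TT b).1.
pose Ti b := (TT b).2.
exists T => S.
have SiS : mxdiag Ti *m S = 1%:M.
  rewrite /S mxdiag_mul -mxdiag1; apply: eq_mxdiag => b.
  by have [h1 _ _ _] := hTT b.
have SSi := mulmx1C SiS.
have Sunit : S \in unitmx := (mulmx1_unit SSi).1.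
have invS : invmx S = mxdiag Ti.
  by rewrite -[invmx S]mul1mx -SiS mulmxK.
have hc : 0 <= (c1 R n + c2 R n) * X0 ^+ n`!.
  apply: mulr_ge0; first by apply: addr_ge0; [exact: c1_ge0 | exact: c2_ge0].
  by apply: exprn_ge0; apply: le_trans hX0.
split => //.
- apply: le_trans (opnorm_le_mxsum _) _.
  apply: le_trans (mxsum_bnd _) _.
    apply: (@mxbnd_diag _ _ _ T ((c1 R n + c2 R n) * X0 ^+ n`!) hc) => b.
    have [_ _ h3 _] := hTT b; apply: mxbnd_le h3 _; exact: num1.
  by rewrite hsum mulrA.
- rewrite invS; apply: le_trans (opnorm_le_mxsum _) _.
  apply: le_trans (mxsum_bnd _) _.
    apply: (@mxbnd_diag _ _ _ Ti ((c1 R n + c2 R n) * X0 ^+ n`!) hc) => b.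
    have [_ _ _ h4] := hTT b; apply: mxbnd_le h4 _; exact: num2.
  by rewrite hsum mulrA.
- rewrite invS /A /S !mxdiag_mul; apply: sd_jordan; apply: sd_mxdiag => b.
  by have [_ h2 _ _] := hTT b.
Qed.
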